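(* Let $\Psi=(\psi_{ij})$ and $\Phi=(\phi_{ij})$ be orthogonal quantum Latin squares of order $6$, where $\Psi$ is classical: there are an orthonormal basis $e_1,\dots,e_6$ of $\mathbb C^6$ and a Latin square $L=(L_{ij})$ of order $6$ on $\{1,\dots,6\}$ with $\psi_{ij}\in\mathbb C e_{L_{ij}}$ for all $i,j$. Suppose $L$ has a subsquare of order three, i.e. there are $R,C\subseteq\{1,\dots,6\}$ with $|R|=|C|=3$ such that $\{L_{ij}: i\in R, j\in C\}$ has exactly $3$ elements. Then for each of the four blocks $A\times B$ with $A\in\{R,\{1,\dots,6\}\setminus R\}$ and $B\in\{C,\{1,\dots,6\}\setminus C\}$, the nine vectors $\phi_{ij}$, $(i,j)\in A\times B$, are pairwise distinct, in the sense that no two of them are scalar multiples of each other.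
   Context: A quantum Latin square (QLS) of order $n$ is an $n\times n$ matrix $\Psi=(\psi_{ij})_{1\le i,j\le n}$ whose entries are unit vectors in $\mathbb C^n$ such that the entries of each row and the entries of each column form an orthonormal basis of $\mathbb C^n$. Two QLS $\Psi=(\psi_{ij})$ and $\Phi=(\phi_{ij})$ of order $n$ are orthogonal if $\{\psi_{ij}\otimes\phi_{ij}: 1\le i,j\le n\}$ is an orthonormal basis of $\mathbb C^n\otimes\mathbb C^n$. *)

(* Defs.v *)
From HB Require Import structures.
From mathcomp Require Import all_boot all_order all_algebra.
From mathcomp Require Import reals.
From mathcomp Require Export complex.
Set Implicit Arguments. Unset Strict Implicit. Unset Printing Implicit Defensive.
Import Order.TTheory GRing.Theory Num.Theory.
Local Open Scope ring_scope.
Local Open Scope complex_scope.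

Definition cvec (R : realType) (I : finType) := I -> R[i].

Definition cdot (R : realType) (I : finType) (u v : cvec R I) : R[i] :=
  \sum_(k : I) u k * (v k)^*.

Definition is_onb (R : realType) (I J : finType) (f : J -> cvec R I) : Prop :=
  (forall j1 j2 : J, cdot (f j1) (f j2) = (if j1 == j2 then 1 else 0)) /\
  (forall v : cvec R I, exists c : J -> R[i],
      forall k : I, v k = \sum_(j : J) c j * f j k).

Definition is_QLS (R : realType) (n : nat)
    (Psi : 'I_n -> 'I_n -> cvec R 'I_n) : Prop :=
  (forall i, is_onb (fun j => Psi i j)) /\ (forall j, is_onb (fun i => Psi i j)).

Definition ctensor (R : realType) (I K : finType) (u : cvec R I) (v : cvec R K)
  : cvec R (I * K)%type := fun q => u q.1 * v q.2.

Definition orthogonal_QLS (R : realType) (n : nat)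
    (Psi Phi : 'I_n -> 'I_n -> cvec R 'I_n) : Prop :=
  is_onb (fun p : ('I_n * 'I_n)%type => ctensor (Psi p.1 p.2) (Phi p.1 p.2)).

Definition is_latin (n : nat) (L : 'I_n -> 'I_n -> 'I_n) : Prop :=
  (forall i, injective (L i)) /\ (forall j, injective (fun i => L i j)).

Definition classical_wrt (R : realType) (n : nat)
    (Psi : 'I_n -> 'I_n -> cvec R 'I_n) (e : 'I_n -> cvec R 'I_n)
    (L : 'I_n -> 'I_n -> 'I_n) : Prop :=
  forall i j, exists c : R[i], forall k, Psi i j k = c * e (L i j) k.

(* Main.v *)
Require Import Defs.
From HB Require Import structures.
From mathcomp Require Import all_boot all_order all_algebra.
From mathcomp Require Import reals complex.
Import Order.TTheory GRing.Theory Num.Theory.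
Local Open Scope ring_scope.


Lemma parseval (R : realType) (I J : finType) (f : J -> cvec R I) (v : cvec R I) :
  is_onb f -> \sum_j cdot v (f j) * (cdot v (f j))^* = cdot v v.
Proof.
case=> orth /(_ v) [c hc].
have cd : forall j, cdot v (f j) = c j.
  move=> j; rewrite /cdot.
  under eq_bigr => k _ do rewrite hc mulr_suml.
  rewrite exchange_big /=.
  transitivity (\sum_l c l * cdot (f l) (f j)).
    by apply eq_bigr => l _; rewrite /cdot mulr_sumr; apply eq_bigr => k _; rewrite mulrA.
  rewrite (bigD1 j) //= orth eqxx mulr1 big1 ?addr0 // => l /negbTE hl.
  by rewrite orth hl mulr0.
under eq_bigr => j _ do rewrite cd.
have -> : cdot v v = \sum_k v k * (\sum_j c j * f j k)^*.
  by apply eq_bigr => k _; rewrite -hc.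
under [X in _ = X]eq_bigr => k _ do rewrite rmorph_sum mulr_sumr.
rewrite exchange_big /=; apply eq_bigr => j _.
transitivity ((c j)^* * cdot v (f j)); first by rewrite cd mulrC.
rewrite /cdot mulr_sumr; apply eq_bigr => k _.
by rewrite rmorphM mulrCA.
Qed.

Lemma cdot_tensor (R : realType) (I K : finType) (a c : cvec R I) (b d : cvec R K) :
  cdot (ctensor a b) (ctensor c d) = cdot a c * cdot b d.
Proof.
rewrite /cdot /ctensor mulr_suml.
under [X in _ = X]eq_bigr => i _ do rewrite mulr_sumr.
rewrite pair_big /=; apply eq_bigr => [[i k]] _ /=.
by rewrite rmorphM mulrACA.
Qed.


Lemma inj_imset_eq (f : 'I_6 -> 'I_6) (X Y : {set 'I_6}) :
  injective f -> #|X| = #|Y| -> f @: X \subset Y -> forall x, (f x \in Y) = (x \in X).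
Proof.
move=> fi cXY sub x.
have e : f @: X = Y by apply/eqP; rewrite eqEcard sub card_imset // cXY leqnn.
by rewrite -e mem_imset.
Qed.

Lemma latin_key (L : 'I_6 -> 'I_6 -> 'I_6) (Rw Cl : {set 'I_6}) :
  is_latin L -> #|Rw| = 3%N -> #|Cl| = 3%N ->
  #|[set L i j | i in Rw, j in Cl]| = 3%N ->
  forall i j, (L i j \in [set L i j | i in Rw, j in Cl]) = ((i \in Rw) == (j \in Cl)).
Proof.
set S := [set L i j | i in Rw, j in Cl].
move=> [lr lc] cR cC cS.
have r1 i j : i \in Rw -> (L i j \in S) = (j \in Cl).
  move=> hi; apply: inj_imset_eq; first exact: lr.
    by rewrite cC cS.
  by apply/subsetP => _ /imsetP [j' hj' ->]; apply: imset2_f.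
have r2 i j : j \in Cl -> (L i j \in S) = (i \in Rw).
  move=> hj; have sub : [set L i' j | i' in Rw] \subset S.
    by apply/subsetP => _ /imsetP [i' hi' ->]; apply: imset2_f.
  exact: (inj_imset_eq (fun i => L i j) Rw S (lc j) (etrans cR (esym cS)) sub i).
have cSc : #|~: S| = 3%N 
  by have := cardsC S; rewrite card_ord cS => h; apply/eqP; rewrite -(eqn_add2l 3) h.
have r3 i j : i \notin Rw -> (L i j \in ~: S) = (j \in Cl).
  move=> hi; apply: inj_imset_eq; first exact: lr.
    by rewrite cC cSc.
  apply/subsetP => _ /imsetP [j' hj' ->].
  by rewrite in_setC r2 // (negbTE hi).
move=> i j; case: (boolP (i \in Rw)) => hi; first by rewrite r1 //.
move: (r3 i j hi); rewrite in_setC.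
by case: (L i j \in S); case: (j \in Cl).
Qed.

Lemma card_compl3 (X : {set 'I_6}) : #|X| = 3%N -> #|~: X| = 3%N.
Proof.
by move=> cX; have := cardsC X; rewrite card_ord cX => h; apply/eqP; rewrite -(eqn_add2l 3) h.
Qed.

Theorem mainTheorem12 (R : realType)
    (Psi Phi : 'I_6 -> 'I_6 -> cvec R 'I_6)
    (e : 'I_6 -> cvec R 'I_6) (L : 'I_6 -> 'I_6 -> 'I_6)
    (Rw Cl : {set 'I_6}) :
  is_QLS Psi -> is_QLS Phi -> orthogonal_QLS Psi Phi ->
  is_onb e -> is_latin L -> classical_wrt Psi e L ->
  #|Rw| = 3%N -> #|Cl| = 3%N ->
  #|[set L i j | i in Rw, j in Cl]| = 3%N ->
  forall A B : {set 'I_6}, (A = Rw \/ A = ~: Rw) -> (B = Cl \/ B = ~: Cl) ->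
  forall i1 j1 i2 j2 : 'I_6,
    i1 \in A -> j1 \in B -> i2 \in A -> j2 \in B -> (i1, j1) <> (i2, j2) ->
    ~ (exists c : R[i], forall k, Phi i1 j1 k = c * Phi i2 j2 k).
Proof.
move=> [QPr QPc] [QFr QFc] orthT onbe lat cls cR cC cS A B hA hB
  i1 j1 i2 j2 hi1 hj1 hi2 hj2 neq [c hc].
set v := Phi i1 j1 in hc *.
set w := Phi i2 j2 in hc *.
pose M i j := cdot v (Phi i j) * (cdot v (Phi i j))^*.
have M0 i j : 0 <= M i j by exact: mul_conjC_ge0.
have vv : cdot v v = 1 by rewrite /v (QFr i1).1 eqxx.
have ww : cdot w w = 1 by rewrite /w (QFr i2).1 eqxx.
have Frow i : \sum_j M i j = 1 by rewrite -vv; exact: parseval.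
have Fcol j : \sum_i M i j = 1 by rewrite -vv; exact: parseval.
have Fsym s : \sum_i \sum_j (if L i j == s then M i j else 0) = 1.
  rewrite pair_big /=.
  have := parseval _ _ _ _ (ctensor (e s) v) orthT.
  rewrite cdot_tensor (onbe.1 s s) eqxx vv mulr1 => <-.
  apply: eq_bigr => [[i j]] _ /=.
  rewrite cdot_tensor.
  have [d hd] := cls i j.
  have eP : cdot (e s) (Psi i j) = d^* * cdot (e s) (e (L i j)).
    rewrite /cdot mulr_sumr; apply eq_bigr => k _; by rewrite hd rmorphM mulrCA.
  have dd : d * d^* = 1.
    have h1 := (QPr i).1 j j; rewrite eqxx in h1.
    have h2 := onbe.1 (L i j) (L i j); rewrite eqxx in h2.
    rewrite -h1; transitivity (d * d^* * cdot (e (L i j)) (e (L i j))); first by rewrite h2 mulr1.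
    rewrite /cdot mulr_sumr; apply eq_bigr => k _; by rewrite !hd rmorphM mulrACA.
  rewrite eP (onbe.1 s (L i j)) (eq_sym s).
  case: (L i j == s).
    by rewrite mulr1 /M rmorphM /= conjCK mulrACA [d^* * d]mulrC dd mul1r.
  by rewrite mulr0 !mul0r.
have M11 : M i1 j1 = 1 by rewrite /M vv rmorph1 mulr1.
have vw : cdot v w = c.
  transitivity (c * cdot w w); last by rewrite ww mulr1.
  rewrite /cdot mulr_sumr; apply eq_bigr => k _; by rewrite hc mulrA.
have cc : c * c^* = 1.
  rewrite -vv; transitivity (c * c^* * cdot w w); first by rewrite ww mulr1.
  rewrite /cdot mulr_sumr; apply eq_bigr => k _; by rewrite hc rmorphM mulrACA.
have M22 : M i2 j2 = 1 by rewrite /M vw cc.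
have key := @latin_key L Rw Cl lat cR cC cS.
set S := [set L i j | i in Rw, j in Cl] in key.
have cSc := card_compl3 S cS.
have cA : #|A| = 3%N by case: hA => ->; [done | exact: card_compl3].
have cB : #|B| = 3%N by case: hB => ->; [done | exact: card_compl3].
have [T [hT cT]] : exists T : {set 'I_6},
    (forall i j, (L i j \in T) = ((i \in A) == (j \in B))) /\ #|T| = 3%N.
  case: hA => ->; case: hB => ->.
  - by exists S.
  - exists (~: S); split=> // i j; rewrite in_setC key in_setC.
    by case: (i \in Rw); case: (j \in Cl).
  - exists (~: S); split=> // i j; rewrite in_setC key in_setC.
    by case: (i \in Rw); case: (j \in Cl).
  - exists S; split=> // i j; rewrite key !in_setC.
    by case: (i \in Rw); case: (j \in Cl).
have SA : \sum_i \sum_j (if i \in A then M i j else 0) = 3%:R.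
  transitivity (\sum_i (if i \in A then 1 else 0 : R[i])).
    apply eq_bigr => i _; case: (boolP (i \in A)) => h; [exact: Frow | by rewrite big1].
  by rewrite -big_mkcond sumr_const cA.
have SB : \sum_i \sum_j (if j \in B then M i j else 0) = 3%:R.
  rewrite exchange_big /=.
  transitivity (\sum_j (if j \in B then 1 else 0 : R[i])).
    apply eq_bigr => j _; case: (boolP (j \in B)) => h; [exact: Fcol | by rewrite big1].
  by rewrite -big_mkcond sumr_const cB.
have ST : \sum_i \sum_j (if L i j \in T then M i j else 0) = 3%:R.
  transitivity (\sum_(s in T) \sum_i \sum_j (if L i j == s then M i j else 0)).
    symmetry; rewrite exchange_big; apply eq_bigr => i _.
    rewrite exchange_big; apply eq_bigr => j _.
    case: (boolP (L i j \in T)) => h.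
      rewrite (bigD1 (L i j)) //= eqxx big1 ?addr0 // => s /andP [_ ns].
      by rewrite eq_sym (negbTE ns).
    rewrite big1 // => s hs; case: eqP => // e'.
    by move: h; rewrite e' hs.
  under eq_bigr => s _ do rewrite Fsym.
  by rewrite sumr_const cT.
have Tot : \sum_i \sum_j M i j = 6%:R.
  under eq_bigr => i _ do rewrite Frow.
  by rewrite sumr_const card_ord.
set X := \sum_i \sum_j (if (i \in A) && (j \in B) then M i j else 0).
have E : \sum_i \sum_j (if i \in A then M i j else 0)
       + \sum_i \sum_j (if j \in B then M i j else 0)
       + \sum_i \sum_j (if L i j \in T then M i j else 0)
       = X *+ 2 + \sum_i \sum_j M i j.
  rewrite /X -!big_split /= -sumrMnl -big_split /=.
  apply eq_bigr => i _; rewrite -!big_split /= -sumrMnl -big_split /=.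
  apply eq_bigr => j _; rewrite hT.
  by case: (i \in A); case: (j \in B); rewrite /= ?(add0r, addr0, mulr2n).
rewrite SA SB ST Tot in E.
have X2 : 2 <= X.
  rewrite /X pair_big /= (bigD1 (i1, j1)) //= (bigD1 (i2, j2)) /=; last first.
    by apply/eqP => h; apply: neq; rewrite h.
  rewrite hi1 hj1 hi2 hj2 /= M11 M22 addrA -[1 + 1]/(2%:R) lerDl.
  by apply: sumr_ge0 => p _; case: ifP => // _; exact: M0.
have XX : X + X = 3%:R.
  apply/(addIr 6%:R); rewrite -mulr2n -E -!natrD //.
have := lerD X2 X2; rewrite XX -natrD ler_nat //.
Qed.
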